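(* Let $k\geq 1$ be fixed and $p\neq 0$ real. The inequality $$\frac{2}{k+2}\left( \frac{\sinh x}{x}\right) ^{kp}+\frac{k}{k+2}\left( \frac{\tanh x}{x}\right) ^{p}>1$$ holds for all $x\in (0,\infty)$ if and only if $p>0$ or $p\leq -\dfrac{12}{5(k+2)}$. *)

(* Defs.v *)
From Stdlib Require Import Reals.
Open Scope R_scope.

(* Main.v *)
Require Import Defs.
From Stdlib Require Import Reals.
Open Scope R_scope.
From Stdlib Require Import Lra Psatz.
From Coquelicot Require Import Coquelicot.
Open Scope R_scope.

Lemma my_ln_le x y : 0 < x -> x <= y -> ln x <= ln y.
Proof. intros hx [h|h]. left; apply ln_increasing; lra. subst; lra. Qed.

Lemma my_exp_le x y : x <= y -> exp x <= exp y.
Proof. intros [h|h]. left; apply exp_increasing; lra. subst; lra. Qed.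

Lemma ln_le_sub1 y : 0 < y -> ln y <= y - 1.
Proof. intros hy. pose proof (exp_ineq1_le (ln y)). rewrite exp_ln in H; lra. Qed.

Lemma mvt_lt (g g' : R -> R) a b : a < b ->
  (forall c, a <= c <= b -> is_derive g c (g' c)) ->
  (forall c, a < c < b -> 0 < g' c) -> g a < g b.
Proof.
  intros hab hd hp.
  destruct (MVT_cor2 g g' a b hab) as [c [hc1 hc2]].
  { intros c hc. apply is_derive_Reals. now apply hd. }
  pose proof (hp c hc2). nra.
Qed.

Lemma mvt_le (g g' : R -> R) a b : a <= b ->
  (forall c, a <= c <= b -> is_derive g c (g' c)) ->
  (forall c, a < c < b -> 0 <= g' c) -> g a <= g b.
Proof.
  intros [hab|hab] hd hp.
  - destruct (MVT_cor2 g g' a b hab) as [c [hc1 hc2]].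
    { intros c hc. apply is_derive_Reals. now apply hd. }
    pose proof (hp c hc2). nra.
  - subst; lra.
Qed.

Lemma chain0 (g g' : R -> R) :
  (forall x, 0 <= x -> is_derive g x (g' x)) -> g 0 = 0 ->
  (forall x, 0 < x -> 0 <= g' x) -> forall x, 0 <= x -> 0 <= g x.
Proof.
  intros hd h0 hp x hx. rewrite <- h0. apply (mvt_le g g'); auto.
  intros c hc; apply hd; lra. intros c hc; apply hp; lra.
Qed.

Lemma chain0s (g g' : R -> R) :
  (forall x, 0 <= x -> is_derive g x (g' x)) -> g 0 = 0 ->
  (forall x, 0 < x -> 0 < g' x) -> forall x, 0 < x -> 0 < g x.
Proof.
  intros hd h0 hp x hx. rewrite <- h0. apply (mvt_lt g g'); auto.
  intros c hc; apply hd; lra. intros c hc; apply hp; lra.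
Qed.

Lemma small_of_deriv (h : R -> R) l : is_derive h 0 l -> h 0 = 0 ->
  forall eps, 0 < eps -> exists d, 0 < d /\ forall y, 0 < y < d -> h y < eps.
Proof.
  intros hd h0 eps he.
  assert (hc : continuity_pt h 0).
  { apply derivable_continuous_pt. exists l. now apply is_derive_Reals. }
  destruct (hc eps he) as [d [hd1 hd2]].
  exists d; split; auto. intros y hy.
  assert (R_dist (h y) (h 0) < eps).
  { apply hd2. split. split. exact I. lra. simpl. unfold R_dist. rewrite Rminus_0_r, Rabs_right; lra. }
  simpl in H; unfold R_dist in H. rewrite h0, Rminus_0_r in H.
  pose proof (Rle_abs (h y)). lra.
Qed.

Lemma lim_pos (g g' h : R -> R) l b :
  (forall x, 0 < x <= b -> is_derive g x (g' x)) ->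
  (forall x, 0 < x <= b -> 0 < g' x) ->
  is_derive h 0 l -> h 0 = 0 ->
  (forall x, 0 < x <= b -> - h x <= g x) ->
  forall x, 0 < x <= b -> 0 < g x.
Proof.
  intros hd hp hh h0 hlow x hx.
  assert (hmid : 0 <= g (x/2)).
  { destruct (Rle_or_lt 0 (g (x/2))) as [H|H]; auto.
    destruct (small_of_deriv h l hh h0 (- g (x/2))) as [d [hd0 hd1]]; [lra|].
    set (y := Rmin (x/2) d / 2).
    assert (hy0 : 0 < y). { assert (0 < Rmin (x/2) d) by (apply Rmin_glb_lt; lra). unfold y; lra. }
    assert (hy1 : y < x/2). { unfold y. pose proof (Rmin_l (x/2) d). lra. }
    assert (hy2 : y < d). { unfold y. pose proof (Rmin_r (x/2) d). lra. }
    pose proof (hd1 y (conj hy0 hy2)).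
    pose proof (hlow y ltac:(lra)).
    assert (g y < g (x/2)).
    { apply (mvt_lt g g'); [lra| |].
      intros c hc; apply hd; lra. intros c hc; apply hp; lra. }
    lra. }
  assert (g (x/2) < g x).
  { apply (mvt_lt g g'); [lra| |]. intros c hc; apply hd; lra. intros c hc; apply hp; lra. }
  lra.
Qed.

Lemma sinh_nonneg x : 0 <= x -> 0 <= sinh x.
Proof. intros hx. unfold sinh. assert (exp (-x) <= exp x) by (apply my_exp_le; lra). lra. Qed.
Lemma sinh_pos x : 0 < x -> 0 < sinh x.
Proof. intros hx. unfold sinh. assert (exp (-x) < exp x) by (apply exp_increasing; lra). lra. Qed.
Lemma ch2 x : cosh x * cosh x = 1 + sinh x * sinh x.
Proof. unfold cosh, sinh. rewrite exp_Ropp. field. apply Rgt_not_eq, exp_pos. Qed.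
Lemma cosh_ge1 x : 1 <= cosh x.
Proof.
  unfold cosh. rewrite exp_Ropp. pose proof (exp_pos x).
  assert (exp x + / exp x - 2 = (exp x - 1)^2 / exp x) by (field; lra).
  assert (0 <= (exp x - 1)^2 / exp x). { apply Rdiv_le_0_compat; [apply pow2_ge_0|lra]. }
  lra.
Qed.
Lemma cosh_pos x : 0 < cosh x.
Proof. pose proof (cosh_ge1 x); lra. Qed.

Ltac dsolve := unfold sinh, cosh; auto_derive; [try tauto | rewrite ?exp_Ropp; field; apply Rgt_not_eq, exp_pos].

Lemma C1 x : 0 <= x -> x <= sinh x.
Proof.
  intros hx.
  assert (0 <= sinh x - x); [|lra].
  apply (chain0 (fun x => sinh x - x) (fun x => cosh x - 1)); auto.
  intros; dsolve. unfold sinh; rewrite Ropp_0, exp_0; lra.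
  intros; pose proof (cosh_ge1 x0); lra.
Qed.

Lemma C2 x : 0 <= x -> x^3/3 <= x*cosh x - sinh x.
Proof.
  intros hx.
  assert (0 <= x*cosh x - sinh x - x^3/3); [|lra].
  apply (chain0 (fun x => x*cosh x - sinh x - x^3/3) (fun x => x * (sinh x - x))); auto.
  intros; dsolve. unfold sinh; rewrite Ropp_0, exp_0; lra.
  intros; pose proof (C1 x0); nra.
Qed.

Lemma C3 x : 0 <= x -> 2*x^3/3 <= sinh x*cosh x - x.
Proof.
  intros hx.
  assert (0 <= sinh x*cosh x - x - 2*x^3/3); [|lra].
  apply (chain0 (fun x => sinh x*cosh x - x - 2*x^3/3) (fun x => 2 * (sinh x * sinh x - x * x))); auto.
  intros; dsolve. unfold sinh; rewrite Ropp_0, exp_0; lra.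
  intros; pose proof (C1 x0); nra.
Qed.

Lemma C4 x : 0 <= x -> cosh x - 1 <= x^2*cosh x/2.
Proof.
  intros hx.
  assert (0 <= x^2*cosh x/2 - cosh x + 1); [|lra].
  apply (chain0 (fun x => x^2*cosh x/2 - cosh x + 1) (fun x => (x*cosh x - sinh x) + x^2 * sinh x / 2)); auto.
  intros; dsolve. unfold cosh; rewrite Ropp_0, exp_0; lra.
  intros x0 hx0; pose proof (C2 x0 ltac:(lra)); pose proof (sinh_nonneg x0 ltac:(lra)); assert (0 <= x0^2) by nra; assert (0 <= x0^3) by (simpl; nra); assert (0 <= x0^2*sinh x0) by (apply Rmult_le_pos; lra); assert (0 <= x0^3*sinh x0) by (apply Rmult_le_pos; lra); nra.
Qed.

Lemma C5 x : 0 <= x -> x*cosh x - sinh x <= x^3*cosh x/3.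
Proof.
  intros hx.
  assert (0 <= x^3*cosh x/3 - (x*cosh x - sinh x)); [|lra].
  apply (chain0 (fun x => x^3*cosh x/3 - (x*cosh x - sinh x)) (fun x => x*(x*cosh x - sinh x) + x^3 * sinh x / 3)); auto.
  intros; dsolve. unfold cosh, sinh; rewrite Ropp_0, exp_0; lra.
  intros x0 hx0; pose proof (C2 x0 ltac:(lra)); pose proof (sinh_nonneg x0 ltac:(lra)); assert (0 <= x0^2) by nra; assert (0 <= x0^3) by (simpl; nra); assert (0 <= x0^2*sinh x0) by (apply Rmult_le_pos; lra); assert (0 <= x0^3*sinh x0) by (apply Rmult_le_pos; lra); nra.
Qed.

Lemma C6 x : 0 <= x -> sinh x - x <= x^3*cosh x/6.
Proof.
  intros hx.
  assert (0 <= x^3*cosh x/6 - sinh x + x); [|lra].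
  apply (chain0 (fun x => x^3*cosh x/6 - sinh x + x) (fun x => (x^2*cosh x/2 - cosh x + 1) + x^3 * sinh x / 6)); auto.
  intros; dsolve. unfold cosh, sinh; rewrite Ropp_0, exp_0; lra.
  intros x0 hx0; pose proof (C4 x0 ltac:(lra)); pose proof (sinh_nonneg x0 ltac:(lra)); assert (0 <= x0^2) by nra; assert (0 <= x0^3) by (simpl; nra); assert (0 <= x0^2*sinh x0) by (apply Rmult_le_pos; lra); assert (0 <= x0^3*sinh x0) by (apply Rmult_le_pos; lra); nra.
Qed.

Lemma C7 y : 0 <= y -> y^5/60 <= y*cosh y + 2*y - 3*sinh y.
Proof.
  intros hy.
  assert (h1 : forall y, 0 <= y -> 0 <= y*sinh y - 2*cosh y + 2 - y^4/12).
  { apply (chain0 _ (fun y => y*cosh y - sinh y - y^3/3)).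
    intros; dsolve. unfold cosh, sinh; rewrite Ropp_0, exp_0; lra.
    intros; pose proof (C2 x); lra. }
  assert (0 <= y*cosh y + 2*y - 3*sinh y - y^5/60); [|lra].
  apply (chain0 (fun y => y*cosh y + 2*y - 3*sinh y - y^5/60) (fun y => y*sinh y - 2*cosh y + 2 - y^4/12)); auto.
  intros; dsolve. unfold cosh, sinh; rewrite Ropp_0, exp_0; lra.
  intros; apply h1; lra.
Qed.
Definition bb0 (x:R) := 1*x*sinh (3*x) - 9/4*1*cosh (3*x) + 9/4*cosh x + 6*(x^2*cosh x).
Definition bb1 (x:R) := 3*x*cosh (3*x) + 1*sinh (3*x) - 9/4*3*sinh (3*x) + 9/4*sinh x + 6*(x^2*sinh x + 2*x*cosh x).
Definition bb2 (x:R) := 9*x*sinh (3*x) + 6*cosh (3*x) - 9/4*9*cosh (3*x) + 9/4*cosh x + 6*(x^2*cosh x + 4*x*sinh x + 2*cosh x).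
Definition bb3 (x:R) := 27*x*cosh (3*x) + 27*sinh (3*x) - 9/4*27*sinh (3*x) + 9/4*sinh x + 6*(x^2*sinh x + 6*x*cosh x + 6*sinh x).
Definition bb4 (x:R) := 81*x*sinh (3*x) + 108*cosh (3*x) - 9/4*81*cosh (3*x) + 9/4*cosh x + 6*(x^2*cosh x + 8*x*sinh x + 12*cosh x).
Definition bb5 (x:R) := 243*x*cosh (3*x) + 405*sinh (3*x) - 9/4*243*sinh (3*x) + 9/4*sinh x + 6*(x^2*sinh x + 10*x*cosh x + 20*sinh x).
Definition bb6 (x:R) := 729*x*sinh (3*x) + 1458*cosh (3*x) - 9/4*729*cosh (3*x) + 9/4*cosh x + 6*(x^2*cosh x + 12*x*sinh x + 30*cosh x).
Definition bb7 (x:R) := 2187*x*cosh (3*x) + 5103*sinh (3*x) - 9/4*2187*sinh (3*x) + 9/4*sinh x + 6*(x^2*sinh x + 14*x*cosh x + 42*sinh x).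
Definition bb8 (x:R) := 6561*x*sinh (3*x) + 17496*cosh (3*x) - 9/4*6561*cosh (3*x) + 9/4*cosh x + 6*(x^2*cosh x + 16*x*sinh x + 56*cosh x).

Ltac dring := unfold sinh, cosh; auto_derive; try tauto; field.
Ltac at0 := unfold sinh, cosh; rewrite ?Rmult_0_r, ?Ropp_0, ?exp_0; lra.

Lemma bb_pos : forall x, 0 < x -> 0 < bb0 x.
Proof.
  assert (h8 : forall x, 0 < x -> 0 < bb8 x).
  { intros x hx. unfold bb8. pose proof (sinh_pos (3*x) ltac:(lra)). pose proof (sinh_pos x hx).
    pose proof (cosh_pos (3*x)). pose proof (cosh_pos x).
    assert (0 < x * sinh (3*x)) by (apply Rmult_lt_0_compat; lra).
    assert (0 < x * sinh x) by (apply Rmult_lt_0_compat; lra).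
    assert (0 <= x^2 * cosh x) by (apply Rmult_le_pos; [nra|lra]). nra. }
  assert (h7 : forall x, 0 < x -> 0 < bb7 x).
  { apply (chain0s bb7 bb8); auto. intros; unfold bb7, bb8; dring. unfold bb7; at0. }
  assert (h6 : forall x, 0 < x -> 0 < bb6 x).
  { apply (chain0s bb6 bb7); auto. intros; unfold bb6, bb7; dring. unfold bb6; at0. }
  assert (h5 : forall x, 0 < x -> 0 < bb5 x).
  { apply (chain0s bb5 bb6); auto. intros; unfold bb5, bb6; dring. unfold bb5; at0. }
  assert (h4 : forall x, 0 < x -> 0 < bb4 x).
  { apply (chain0s bb4 bb5); auto. intros; unfold bb4, bb5; dring. unfold bb4; at0. }
  assert (h3 : forall x, 0 < x -> 0 < bb3 x).
  { apply (chain0s bb3 bb4); auto. intros; unfold bb3, bb4; dring. unfold bb3; at0. }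
  assert (h2 : forall x, 0 < x -> 0 < bb2 x).
  { apply (chain0s bb2 bb3); auto. intros; unfold bb2, bb3; dring. unfold bb2; at0. }
  assert (h1 : forall x, 0 < x -> 0 < bb1 x).
  { apply (chain0s bb1 bb2); auto. intros; unfold bb1, bb2; dring. unfold bb1; at0. }
  apply (chain0s bb0 bb1); auto. intros; unfold bb0, bb1; dring. unfold bb0; at0.
Qed.

Lemma B1_eq x : 4*x*sinh x*(cosh x*cosh x) - 9*(sinh x*sinh x)*cosh x + 6*x^2*cosh x - x*sinh x = bb0 x.
Proof.
  unfold bb0, sinh, cosh. replace (3*x) with (x+(x+x)) by ring.
  rewrite !exp_Ropp, !exp_plus. field. apply Rgt_not_eq, exp_pos.
Qed.

Definition NN x := sinh x * cosh x - x.
Definition MM x := x * cosh x - sinh x.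

Lemma NN_pos x : 0 < x -> 0 < NN x.
Proof. intros hx. pose proof (C3 x ltac:(lra)). unfold NN. assert (0 < x^3) by (apply pow_lt; lra). lra. Qed.
Lemma MM_pos x : 0 < x -> 0 < MM x.
Proof. intros hx. pose proof (C2 x ltac:(lra)). unfold MM. assert (0 < x^3) by (apply pow_lt; lra). lra. Qed.

Definition phi1 x := 5*ln (NN x) - 5*ln (2*MM x) - ln (cosh x).
Definition phi1' x := sinh x * bb0 x / (NN x * MM x * cosh x).


Lemma cleared x : 0 < x ->
  let e := exp x in
  0 < e /\ 0 < e*e - 1 /\ 0 < e*e + 1 /\ 0 < (e*e-1)*(e*e+1) - 4*x*(e*e) /\
  0 < x*(e*e+1) - (e*e-1).
Proof.
  intros hx e. pose proof (exp_pos x) as he. fold e in he.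
  pose proof (NN_pos x hx) as hN. pose proof (MM_pos x hx) as hM. pose proof (sinh_pos x hx) as hs.
  unfold NN, MM, sinh, cosh in *. rewrite exp_Ropp in *. fold e in hN, hM, hs.
  repeat split; auto.
  - replace (e*e-1) with ((e - /e)/2 * (2*e)) by (field; lra). apply Rmult_lt_0_compat; lra.
  - nra.
  - replace ((e*e-1)*(e*e+1) - 4*x*(e*e)) with (((e - /e)/2 * ((e + /e)/2) - x) * (4*(e*e))) by (field; lra).
    apply Rmult_lt_0_compat; nra.
  - replace (x*(e*e+1) - (e*e-1)) with ((x * ((e + /e)/2) - (e - /e)/2) * (2*e)) by (field; lra).
    apply Rmult_lt_0_compat; lra.
Qed.

Ltac nz := repeat split; first [apply Rgt_not_eq; nra | apply Rlt_not_eq; nra].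

Ltac dprep x hx := let e := fresh "e" in
  destruct (cleared x hx) as [?he [?hs [?hc [?hn ?hm]]]];
  unfold sinh, cosh; rewrite ?exp_Ropp; set (e := exp x) in *.

Lemma phi1_deriv x : 0 < x -> is_derive phi1 x (phi1' x).
Proof.
  intros hx. pose proof (NN_pos x hx) as hN. pose proof (MM_pos x hx) as hM.
  pose proof (cosh_pos x) as hc.
  unfold phi1, phi1'. rewrite <- B1_eq. unfold NN, MM in *.
  unfold sinh, cosh in *. auto_derive.
  - repeat split; lra.
  - destruct (cleared x hx) as [he [hs [hc' [hn hm]]]].
    rewrite !exp_Ropp in *. set (e := exp x) in *. field. nz.
Qed.

Definition FF (k p x : R) := 2 / (k + 2) * Rpower (sinh x / x) (k * p) + k / (k + 2) * Rpower (tanh x / x) p.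
Definition E1 k p x := exp (k * p * ln (sinh x / x)).
Definition E2 p x := exp (p * ln (tanh x / x)).
Definition FF' (k p x : R) := p*k/((k+2)*x*sinh x*cosh x) * (2*E1 k p x*MM x*cosh x - E2 p x*NN x).

Lemma FF_deriv k p x : 0 < k -> 0 < x -> is_derive (FF k p) x (FF' k p x).
Proof.
  intros hk hx. 
  pose proof (sinh_pos x hx) as hs0.
  assert (0 < sinh x / x) by (apply Rdiv_lt_0_compat; lra).
  assert (0 < tanh x / x) by (unfold tanh; apply Rdiv_lt_0_compat; [apply Rdiv_lt_0_compat; [lra|apply cosh_pos]|lra]).
  unfold FF, FF', E1, E2, MM, NN, Rpower, tanh in *.
  unfold sinh, cosh, Rminus, Rdiv in *. auto_derive.
  - pose proof (exp_pos x); pose proof (exp_pos (-x)). repeat split; first [lra | apply Rgt_not_eq; lra | apply Rlt_not_eq; lra].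
  - destruct (cleared x hx) as [he [hs [hc' [hn hm]]]].
    rewrite !exp_Ropp in *. set (e := exp x) in *. field. nz.
Qed.

Lemma FF_deriv_m1 k p x : 0 < k -> 0 < x -> is_derive (fun y => FF k p y - 1) x (FF' k p x).
Proof.
  intros hk hx. 
  pose proof (sinh_pos x hx) as hs0.
  assert (0 < sinh x / x) by (apply Rdiv_lt_0_compat; lra).
  assert (0 < tanh x / x) by (unfold tanh; apply Rdiv_lt_0_compat; [apply Rdiv_lt_0_compat; [lra|apply cosh_pos]|lra]).
  unfold FF, FF', E1, E2, MM, NN, Rpower, tanh in *.
  unfold sinh, cosh, Rminus, Rdiv in *. auto_derive.
  - pose proof (exp_pos x); pose proof (exp_pos (-x)). repeat split; first [lra | apply Rgt_not_eq; lra | apply Rlt_not_eq; lra].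
  - destruct (cleared x hx) as [he [hs [hc' [hn hm]]]].
    rewrite !exp_Ropp in *. set (e := exp x) in *. field. nz.
Qed.

Lemma FF_deriv_1m k p x : 0 < k -> 0 < x -> is_derive (fun y => 1 - FF k p y) x (- FF' k p x).
Proof.
  intros hk hx. 
  pose proof (sinh_pos x hx) as hs0.
  assert (0 < sinh x / x) by (apply Rdiv_lt_0_compat; lra).
  assert (0 < tanh x / x) by (unfold tanh; apply Rdiv_lt_0_compat; [apply Rdiv_lt_0_compat; [lra|apply cosh_pos]|lra]).
  unfold FF, FF', E1, E2, MM, NN, Rpower, tanh in *.
  unfold sinh, cosh, Rminus, Rdiv in *. auto_derive.
  - pose proof (exp_pos x); pose proof (exp_pos (-x)). repeat split; first [lra | apply Rgt_not_eq; lra | apply Rlt_not_eq; lra].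
  - destruct (cleared x hx) as [he [hs [hc' [hn hm]]]].
    rewrite !exp_Ropp in *. set (e := exp x) in *. field. nz.
Qed.

Lemma lim_pos' (g g' h : R -> R) b :
  (forall x, 0 < x <= b -> is_derive g x (g' x)) ->
  (forall x, 0 < x <= b -> 0 < g' x) ->
  ex_derive h 0 -> h 0 = 0 ->
  (forall x, 0 < x <= b -> - h x <= g x) ->
  forall x, 0 < x <= b -> 0 < g x.
Proof. intros hd hp [l hl] h0 hlow. exact (lim_pos g g' h l b hd hp hl h0 hlow). Qed.

Lemma cosh0 : cosh 0 = 1.
Proof. unfold cosh. rewrite Ropp_0, exp_0. lra. Qed.

Lemma ln_cosh_nonneg x : 0 <= ln (cosh x).
Proof. rewrite <- ln_1. apply my_ln_le; [lra| apply cosh_ge1]. Qed.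

Lemma K_ge x : 0 <= x -> 4*x^5/15 <= 2*x*(cosh x*cosh x) + x - 3*sinh x*cosh x.
Proof.
  intros hx. pose proof (C7 (2*x) ltac:(lra)).
  assert (2*x*cosh (2*x) + 2*(2*x) - 3*sinh (2*x) = 2*(2*x*(cosh x*cosh x) + x - 3*sinh x*cosh x)).
  { unfold sinh, cosh. replace (2*x) with (x+x) by ring. rewrite !exp_Ropp, !exp_plus. field. apply Rgt_not_eq, exp_pos. }
  assert ((2*x)^5 = 32 * x^5) by ring. lra.
Qed.

Definition lz x := 3*ln (sinh x / x) - ln (cosh x).
Definition lz' x := (2*x*(cosh x*cosh x) + x - 3*sinh x*cosh x)/(x*sinh x*cosh x).

Lemma lz_deriv x : 0 < x -> is_derive lz x (lz' x).
Proof.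
  intros hx.
  pose proof (sinh_pos x hx) as hs0.
  assert (0 < sinh x / x) by (apply Rdiv_lt_0_compat; lra).
  pose proof (cosh_pos x).
  unfold lz, lz' in *.
  unfold sinh, cosh, Rminus, Rdiv in *. auto_derive.
  - pose proof (exp_pos x); pose proof (exp_pos (-x)). repeat split; first [lra | apply Rgt_not_eq; lra | apply Rlt_not_eq; lra].
  - destruct (cleared x hx) as [he [hs [hc' [hn hm]]]].
    rewrite !exp_Ropp in *. set (e := exp x) in *. field. nz.
Qed.

Lemma lz_pos x : 0 < x -> 0 < lz x.
Proof.
  intros hx.
  apply (lim_pos' lz lz' (fun y => ln (cosh y)) x); try lra.
  - intros; apply lz_deriv; lra.
  - intros y hy. unfold lz'. pose proof (K_ge y ltac:(lra)). pose proof (sinh_pos y ltac:(lra)).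
    pose proof (cosh_pos y). assert (0 < y^5) by (apply pow_lt; lra).
    apply Rdiv_lt_0_compat. lra. apply Rmult_lt_0_compat; [|lra]. apply Rmult_lt_0_compat; lra.
  - unfold cosh. auto_derive. pose proof (exp_pos 0); pose proof (exp_pos (-0)). lra.
  - rewrite cosh0, ln_1. lra.
  - intros y hy. unfold lz. pose proof (C1 y ltac:(lra)).
    assert (1 <= sinh y / y). { apply (Rmult_le_reg_r y); [lra|]. field_simplify; lra. }
    assert (0 <= ln (sinh y / y)) by (rewrite <- ln_1; apply my_ln_le; lra). lra.
Qed.

Lemma phi1_pos x : 0 < x -> 0 < phi1 x.
Proof.
  intros hx.
  apply (lim_pos' phi1 phi1' (fun y => 6 * ln (cosh y)) x); try lra.
  - intros; apply phi1_deriv; lra.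
  - intros y hy. unfold phi1'. pose proof (bb_pos y ltac:(lra)). pose proof (sinh_pos y ltac:(lra)).
    pose proof (cosh_pos y). pose proof (NN_pos y ltac:(lra)). pose proof (MM_pos y ltac:(lra)).
    apply Rdiv_lt_0_compat. apply Rmult_lt_0_compat; lra. apply Rmult_lt_0_compat; [|lra]. apply Rmult_lt_0_compat; lra.
  - unfold cosh. auto_derive. pose proof (exp_pos 0); pose proof (exp_pos (-0)). lra.
  - rewrite cosh0, ln_1. lra.
  - intros y hy. unfold phi1. pose proof (C3 y ltac:(lra)). pose proof (C5 y ltac:(lra)).
    pose proof (NN_pos y ltac:(lra)). pose proof (MM_pos y ltac:(lra)). pose proof (cosh_pos y).
    assert (0 < y^3) by (apply pow_lt; lra).
    assert (ln (2*y^3/3) <= ln (NN y)) by (apply my_ln_le; unfold NN; lra).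
    assert (hq : ln (2*MM y) <= ln (2*y^3/3 * cosh y)) by (apply my_ln_le; unfold MM in *; nra).
    rewrite (ln_mult (2*y^3/3) (cosh y)) in hq by lra. cbv beta. lra.
Qed.

Lemma basic_logs x : 0 < x ->
  0 <= ln (sinh x / x) /\ ln (sinh x / x) <= ln (cosh x) /\ 0 <= ln (cosh x) /\
  ln (tanh x / x) = ln (sinh x / x) - ln (cosh x) /\
  NN x = exp (ln (NN x)) /\ 2 * MM x * cosh x = exp (ln (2 * MM x) + ln (cosh x)).
Proof.
  intros hx. pose proof (C1 x ltac:(lra)). pose proof (MM_pos x hx). pose proof (NN_pos x hx).
  pose proof (cosh_pos x). pose proof (sinh_pos x hx).
  assert (1 <= sinh x / x). { apply (Rmult_le_reg_r x); [lra|]. field_simplify; lra. }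
  assert (sinh x / x <= cosh x). { apply (Rmult_le_reg_r x); [lra|]. field_simplify; [|lra]. unfold MM in *. lra. }
  split; [rewrite <- ln_1; apply my_ln_le; lra|].
  split; [apply my_ln_le; lra|].
  split; [apply ln_cosh_nonneg|].
  split. { unfold tanh. replace (sinh x / cosh x / x) with ((sinh x / x) / cosh x) by (field; lra).
           apply ln_div; lra. }
  split. { rewrite exp_ln; auto. }
  rewrite <- ln_mult by lra. rewrite exp_ln; [ring|]. apply Rmult_lt_0_compat; lra.
Qed.

Lemma bracket_eq k p x : 0 < x ->
  2*E1 k p x*MM x*cosh x - E2 p x*NN x =
  exp (ln (2 * MM x) + ln (cosh x) + k*p*ln (sinh x / x)) -
  exp (p*(ln (sinh x / x) - ln (cosh x)) + ln (NN x)).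
Proof.
  intros hx. destruct (basic_logs x hx) as [_ [_ [_ [hT [hN hM]]]]].
  pose proof (NN_pos x hx). pose proof (MM_pos x hx). pose proof (cosh_pos x).
  unfold E1, E2. rewrite hT, !exp_plus, !exp_ln by lra. ring.
Qed.

Lemma coef_sign (k x : R) : 1 <= k -> 0 < x -> 0 < (k+2)*x*sinh x*cosh x.
Proof.
  intros hk hx. pose proof (sinh_pos x hx). pose proof (cosh_pos x).
  apply Rmult_lt_0_compat; [|lra]. apply Rmult_lt_0_compat; [|lra]. apply Rmult_lt_0_compat; lra.
Qed.

Lemma if_neg k p : 1 <= k -> p <= - (12 / (5 * (k + 2))) ->
  forall x, 0 < x -> FF k p x > 1.
Proof.
  intros hk hp x hx.
  set (P := 12 / (5 * (k + 2))) in hp.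
  assert (hP : P * (k+2) = 12/5) by (unfold P; field; lra).
  assert (hP0 : 0 < P) by (unfold P; apply Rdiv_lt_0_compat; lra).
  assert (0 < FF k p x - 1); [|lra].
  apply (lim_pos' (fun y => FF k p y - 1) (FF' k p) (fun y => 2/(k+2)*(1 - exp (k*p*ln (cosh y)))) x); try lra.
  - intros y hy. apply FF_deriv_m1; lra.
  - intros y hy. assert (hy0 : 0 < y) by lra.
    destruct (basic_logs y hy0) as [hu0 [huL [hL0 [hT [hN hM]]]]].
    pose proof (phi1_pos y hy0) as hphi. pose proof (lz_pos y hy0) as hlz.
    unfold phi1 in hphi. unfold lz in hlz.
    set (u := ln (sinh y / y)) in *. set (L := ln (cosh y)) in *.
    set (a1 := ln (NN y)) in *. set (a2 := ln (2 * MM y)) in *.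
    assert (0 <= (k-1)*(3*u - L)) by (apply Rmult_le_pos; lra).
    assert (hZ : (k+2)*L/3 <= (k-1)*u + L) by nra.
    assert (hpz : p*((k-1)*u + L) <= -4*L/5).
    { assert (hZ0 : 0 <= (k-1)*u + L) by (assert (0 <= (k+2)*L) by (apply Rmult_le_pos; lra); lra).
      assert (h1: 0 <= (- p - P) * ((k-1)*u + L)) by (apply Rmult_le_pos; lra).
      assert (h2: P * ((k+2)*L/3) <= P * ((k-1)*u + L)) by (apply Rmult_le_compat_l; lra).
      assert (P * ((k+2)*L/3) = 4*L/5) by (unfold P; field; lra).
      nra. }
    assert (hbr : 2*E1 k p y*MM y*cosh y - E2 p y*NN y < 0).
    { rewrite bracket_eq by lra. fold u L a1 a2.
      assert (exp (a2 + L + k*p*u) < exp (p*(u - L) + a1)); [apply exp_increasing; nra|lra]. }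
    unfold FF'. pose proof (coef_sign k y hk hy0).
    assert (p * k / ((k + 2) * y * sinh y * cosh y) < 0).
    { unfold Rdiv. assert (0 < / ((k + 2) * y * sinh y * cosh y)) by (apply Rinv_0_lt_compat; lra).
      assert (p * k < 0) by nra. nra. }
    nra.
  - unfold cosh. auto_derive. pose proof (exp_pos 0); pose proof (exp_pos (-0)). lra.
  - rewrite cosh0, ln_1, Rmult_0_r, exp_0. ring.
  - intros y hy. assert (hy0 : 0 < y) by lra.
    destruct (basic_logs y hy0) as [hu0 [huL [hL0 [hT [hN hM]]]]].
    unfold FF, Rpower. rewrite hT.
    set (u := ln (sinh y / y)) in *. set (L := ln (cosh y)) in *.
    assert (hkp : k*p <= 0) by nra.
    assert (exp (k*p*L) <= exp (k*p*u)) by (apply my_exp_le; nra).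
    assert (1 <= exp (p*(u - L))) by (rewrite <- exp_0; apply my_exp_le; nra).
    assert (0 < 2/(k+2)) by (apply Rdiv_lt_0_compat; lra).
    assert (0 < k/(k+2)) by (apply Rdiv_lt_0_compat; lra).
    assert (2/(k+2) + k/(k+2) = 1) by (field; lra).
    cbv beta. nra.
Qed.

Lemma if_pos k p : 1 <= k -> 0 < p -> forall x, 0 < x -> FF k p x > 1.
Proof.
  intros hk hp x hx.
  assert (0 < FF k p x - 1); [|lra].
  apply (lim_pos' (fun y => FF k p y - 1) (FF' k p) (fun y => k/(k+2)*(1 - exp (- p*ln (cosh y)))) x); try lra.
  - intros y hy. apply FF_deriv_m1; lra.
  - intros y hy. assert (hy0 : 0 < y) by lra.
    destruct (basic_logs y hy0) as [hu0 [huL [hL0 [hT [hN hM]]]]].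
    pose proof (K_ge y ltac:(lra)) as hK.
    assert (0 < y^5) by (apply pow_lt; lra).
    assert (hlt : NN y < 2 * MM y * cosh y) by (unfold NN, MM; nra).
    assert (ha : ln (NN y) < ln (2 * MM y) + ln (cosh y)).
    { rewrite <- ln_mult. apply ln_increasing. apply NN_pos; lra. lra.
      pose proof (MM_pos y hy0); lra. apply cosh_pos. }
    set (u := ln (sinh y / y)) in *. set (L := ln (cosh y)) in *.
    set (a1 := ln (NN y)) in *. set (a2 := ln (2 * MM y)) in *.
    assert (hZ0 : 0 <= (k-1)*u + L) by (assert (0 <= (k-1)*u) by (apply Rmult_le_pos; lra); lra).
    assert (hpz : 0 <= p*((k-1)*u + L)) by (apply Rmult_le_pos; lra).
    assert (hbr : 0 < 2*E1 k p y*MM y*cosh y - E2 p y*NN y).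
    { rewrite bracket_eq by lra. fold u L a1 a2.
      assert (exp (p*(u - L) + a1) < exp (a2 + L + k*p*u)); [apply exp_increasing; nra|lra]. }
    unfold FF'. pose proof (coef_sign k y hk hy0).
    assert (0 < p * k / ((k + 2) * y * sinh y * cosh y)).
    { apply Rdiv_lt_0_compat; nra. }
    nra.
  - unfold cosh. auto_derive. pose proof (exp_pos 0); pose proof (exp_pos (-0)). lra.
  - rewrite cosh0, ln_1, Rmult_0_r, exp_0. ring.
  - intros y hy. assert (hy0 : 0 < y) by lra.
    destruct (basic_logs y hy0) as [hu0 [huL [hL0 [hT [hN hM]]]]].
    unfold FF, Rpower. rewrite hT.
    set (u := ln (sinh y / y)) in *. set (L := ln (cosh y)) in *.
    assert (hkp : 0 <= k*p) by nra.
    assert (1 <= exp (k*p*u)) by (rewrite <- exp_0; apply my_exp_le; nra).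
    assert (exp (- p * L) <= exp (p*(u - L))) by (apply my_exp_le; nra).
    assert (0 < 2/(k+2)) by (apply Rdiv_lt_0_compat; lra).
    assert (0 < k/(k+2)) by (apply Rdiv_lt_0_compat; lra).
    assert (2/(k+2) + k/(k+2) = 1) by (field; lra).
    cbv beta. nra.
Qed.

Lemma small_ex (h : R -> R) : ex_derive h 0 -> h 0 = 0 ->
  forall eps, 0 < eps -> exists d, 0 < d /\ forall y, 0 < y < d -> h y < eps.
Proof. intros [l hl] h0. exact (small_of_deriv h l hl h0). Qed.

Lemma only_if k p : 1 <= k -> - (12 / (5 * (k + 2))) < p -> p < 0 ->
  ~ (forall x, 0 < x -> FF k p x > 1).
Proof.
  intros hk hp hpn hall.
  set (P := 12 / (5 * (k + 2))) in hp.
  assert (hP : P * (k+2) = 12/5) by (unfold P; field; lra).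
  assert (hP0 : 0 < P) by (unfold P; apply Rdiv_lt_0_compat; lra).
  set (q := - p).
  assert (hq : 0 < q) by (unfold q; lra).
  assert (hqP : q < P) by (unfold q; lra).
  assert (hr : 1 < P / q) by (apply (Rmult_lt_reg_r q); [lra|]; unfold Rdiv; rewrite Rmult_assoc, Rinv_l; lra).
  destruct (small_ex (fun y => cosh y * (cosh y * cosh y) - 1)) with (eps := P/q - 1) as [d [hd hdd]].
  { unfold cosh. auto_derive. auto. }
  { rewrite cosh0. ring. }
  { lra. }
  set (b := d/2).
  assert (hb : 0 < b) by (unfold b; lra).
  assert (0 < 1 - FF k p b); [|pose proof (hall b hb); lra].
  apply (lim_pos' (fun y => 1 - FF k p y) (fun y => - FF' k p y) (fun y => k/(k+2)*(exp (- p*ln (cosh y)) - 1)) b); try lra.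
  - intros y hy. apply FF_deriv_1m; lra.
  - intros y hy. assert (hy0 : 0 < y) by lra.
    assert (hc3 : cosh y * (cosh y * cosh y) < P / q) by (pose proof (hdd y ltac:(unfold b in hy; lra)); lra).
    destruct (basic_logs y hy0) as [hu0 [huL [hL0 [hT [hN hM]]]]].
    pose proof (K_ge y ltac:(lra)) as hK.
    pose proof (C5 y ltac:(lra)) as h5. pose proof (C4 y ltac:(lra)) as h4. pose proof (C6 y ltac:(lra)) as h6.
    pose proof (NN_pos y hy0) as hNp. pose proof (MM_pos y hy0) as hMp.
    pose proof (cosh_pos y) as hcp. pose proof (cosh_ge1 y) as hc1. pose proof (sinh_pos y hy0) as hsp.
    remember (cosh y) as c eqn:Hc.
    assert (hD : 0 < 2 * MM y * c) by (apply Rmult_lt_0_compat; lra).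
    assert (hlr : ln (NN y) - (ln (2 * MM y) + ln c) <= - (2*y^2/5) / (c*c)).
    { rewrite <- ln_mult by lra. rewrite <- ln_div by lra.
      eapply Rle_trans; [apply ln_le_sub1; apply Rdiv_lt_0_compat; lra|].
      assert (hK2 : NN y / (2 * MM y * c) - 1 = - (2*y*(c*c) + y - 3*sinh y*c) / (2 * MM y * c)) by (unfold NN, MM in *; rewrite <- Hc in *; field; repeat split; apply Rgt_not_eq; nra).
      rewrite hK2.
      assert (hy3 : 0 < y^3) by (apply pow_lt; lra).
      assert (hM2 : 2 * MM y * c <= 2*y^3*(c*c)/3) by (unfold MM in *; rewrite <- Hc in *; nra).
      assert (hK3 : 4*y^5/15 <= 2*y*(c*c) + y - 3*sinh y*c) by exact hK.
      assert (hfrac : (4*y^5/15) / (2*y^3*(c*c)/3) <= (2*y*(c*c) + y - 3*sinh y*c) / (2 * MM y * c)).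
      { apply Rle_trans with ((4*y^5/15) / (2 * MM y * c)).
        - apply Rmult_le_compat_l. assert (0 < y^5) by (apply pow_lt; lra). lra.
          apply Rinv_le_contravar; lra.
        - apply Rmult_le_compat_r. left; apply Rinv_0_lt_compat; lra. lra. }
      assert ((4*y^5/15) / (2*y^3*(c*c)/3) = (2*y^2/5)/(c*c)) by (field; split; lra).
      unfold Rdiv in *. lra. }
    assert (hu : ln (sinh y / y) <= y^2 * c / 6).
    { eapply Rle_trans; [apply ln_le_sub1; apply Rdiv_lt_0_compat; lra|].
      apply (Rmult_le_reg_r y); [lra|]. field_simplify; [|lra]. simpl in h6 |- *. nra. }
    assert (hL : ln c <= y^2 * c / 2) by (pose proof (ln_le_sub1 c hcp); lra).
    set (u := ln (sinh y / y)) in *. set (L := ln c) in *.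
    set (a1 := ln (NN y)) in *. set (a2 := ln (2 * MM y)) in *.
    assert (hZ : (k-1)*u + L <= (k+2)*(y^2*c/6)).
    { assert ((k-1)*u <= (k-1)*(y^2*c/6)) by (apply Rmult_le_compat_l; lra). lra. }
    assert (hqz : - q * ((k+2)*(y^2*c/6)) <= p*((k-1)*u + L)).
    { unfold q. rewrite Ropp_involutive. apply Rmult_le_compat_neg_l; lra. }
    assert (hfin : - (2*y^2/5) / (c*c) < - q * ((k+2)*(y^2*c/6))).
    { assert (hcc : 0 < c*c) by nra.
      assert (hqc : q * (k+2) * (c*(c*c)) < 12/5).
      { apply Rle_lt_trans with (q*(k+2)*(c*(c*c))); [lra|].
        assert (q * (k+2) * (c*(c*c)) < q*(k+2)*(P/q)).
        { apply Rmult_lt_compat_l; [nra|lra]. }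
        assert (q*(k+2)*(P/q) = 12/5) by (rewrite <- hP; field; lra). lra. }
      assert (hy2 : 0 < y^2) by (apply pow_lt; lra).
      assert (- (2*y^2/5) / (c*c) - (- q * ((k+2)*(y^2*c/6))) = y^2/(30*(c*c)) * (5*(q*(k+2)*(c*(c*c))) - 12)) by (field; lra).
      assert (0 < y^2/(30*(c*c))) by (apply Rdiv_lt_0_compat; lra).
      nra. }
    assert (hbr : 0 < 2*E1 k p y*MM y*cosh y - E2 p y*NN y).
    { rewrite bracket_eq by lra. rewrite <- Hc. fold L u a1 a2.
      assert (exp (p*(u - L) + a1) < exp (a2 + L + k*p*u)); [apply exp_increasing; nra|lra]. }
    unfold FF'. pose proof (coef_sign k y hk hy0).
    assert (p * k / ((k + 2) * y * sinh y * cosh y) < 0).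
    { unfold Rdiv. assert (0 < / ((k + 2) * y * sinh y * cosh y)) by (apply Rinv_0_lt_compat; lra).
      assert (p * k < 0) by nra. nra. }
    nra.
  - unfold cosh. auto_derive. pose proof (exp_pos 0); pose proof (exp_pos (-0)). lra.
  - rewrite cosh0, ln_1, Rmult_0_r, exp_0. ring.
  - intros y hy. assert (hy0 : 0 < y) by lra.
    destruct (basic_logs y hy0) as [hu0 [huL [hL0 [hT [hN hM]]]]].
    unfold FF, Rpower. rewrite hT.
    set (u := ln (sinh y / y)) in *. set (L := ln (cosh y)) in *.
    assert (hkp : k*p <= 0) by nra.
    assert (exp (k*p*u) <= 1) by (rewrite <- exp_0; apply my_exp_le; nra).
    assert (exp (p*(u - L)) <= exp (- p * L)) by (apply my_exp_le; nra).
    assert (0 < 2/(k+2)) by (apply Rdiv_lt_0_compat; lra).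
    assert (0 < k/(k+2)) by (apply Rdiv_lt_0_compat; lra).
    assert (2/(k+2) + k/(k+2) = 1) by (field; lra).
    cbv beta. nra.
Qed.

Theorem theorem3p3 (k p : R) (hk : 1 <= k) (hp : p <> 0) :
  (forall x : R, 0 < x ->
     2 / (k + 2) * Rpower (sinh x / x) (k * p)
     + k / (k + 2) * Rpower (tanh x / x) p > 1)
  <-> (0 < p \/ p <= - (12 / (5 * (k + 2)))).
Proof.
  split.
  - intros H. destruct (Rlt_or_le 0 p) as [h0|h0]; [left; exact h0|right].
    destruct (Rle_or_lt p (- (12 / (5 * (k + 2))))) as [h1|h1]; [exact h1|].
    exfalso. apply (only_if k p hk h1); [lra|]. intros x hx. exact (H x hx).
  - intros [h|h] x hx.
    + exact (if_pos k p hk h x hx).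
    + exact (if_neg k p hk h x hx).
Qed.
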